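(* In $X=(\mathbb{R}^2,\|\cdot\|_\infty)$ let $A=\{(x,y):x>0,\ y\ge 1/x\}$ and $B=\{(x,y):x>-1,\ y\le \frac{1}{x+1}-1\}$. Then $\mathrm{dist}(A,B)=1$, the ordered pair $(A,B)$ has the $BUC$ property, and $(A,B)$ does not have the $UC$ property.
   Context: $\|(x,y)\|_\infty=\max\{|x|,|y|\}$; $\mathrm{dist}(A,B)=\inf\{\|a-b\|_\infty:a\in A,b\in B\}$. The ordered pair $(A,B)$ has the $UC$ property if for all sequences $\{x_n\},\{z_n\}\subset A$, $\{y_n\}\subset B$ with $\lim_n\|x_n-y_n\|=\lim_n\|z_n-y_n\|=\mathrm{dist}(A,B)$ one has $\lim_n\|x_n-z_n\|=0$. It has the bounded $UC$ property ($BUC$) if the same implication holds whenever in addition $\{x_n\}$ and $\{z_n\}$ are bounded. *)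

(* Defs.v *)
From Stdlib Require Import Reals.
Open Scope R_scope.

Definition ninf (p : R * R) : R := Rmax (Rabs (fst p)) (Rabs (snd p)).
Definition dinf (p q : R * R) : R := ninf (fst p - fst q, snd p - snd q).

Definition is_dist (A B : R * R -> Prop) (d : R) : Prop :=
  (forall a b, A a -> B b -> d <= dinf a b) /\
  (forall m, (forall a b, A a -> B b -> m <= dinf a b) -> m <= d).

Definition bounded_seq (x : nat -> R * R) : Prop :=
  exists M, forall n, ninf (x n) <= M.

Definition UC (A B : R * R -> Prop) : Prop :=
  forall d, is_dist A B d ->
  forall x z y : nat -> R * R,
    (forall n, A (x n)) -> (forall n, A (z n)) -> (forall n, B (y n)) ->
    Un_cv (fun n => dinf (x n) (y n)) d ->
    Un_cv (fun n => dinf (z n) (y n)) d ->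
    Un_cv (fun n => dinf (x n) (z n)) 0.

Definition BUC (A B : R * R -> Prop) : Prop :=
  forall d, is_dist A B d ->
  forall x z y : nat -> R * R,
    (forall n, A (x n)) -> (forall n, A (z n)) -> (forall n, B (y n)) ->
    bounded_seq x -> bounded_seq z ->
    Un_cv (fun n => dinf (x n) (y n)) d ->
    Un_cv (fun n => dinf (z n) (y n)) d ->
    Un_cv (fun n => dinf (x n) (z n)) 0.

Definition setA : R * R -> Prop := fun p => 0 < fst p /\ snd p >= 1 / fst p.
Definition setB : R * R -> Prop :=
  fun p => -1 < fst p /\ snd p <= 1 / (fst p + 1) - 1.

(* Main.v *)
Require Import Defs.
From Stdlib Require Import Reals Lra Lia.
Open Scope R_scope.

Lemma abs_bounds r c : Rabs r <= c -> -c <= r <= c.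
Proof. unfold Rabs; destruct Rcase_abs; lra. Qed.

Lemma dinf_bounds a b c : dinf a b <= c ->
  -c <= fst a - fst b <= c /\ -c <= snd a - snd b <= c.
Proof.
  unfold dinf, ninf; simpl; intro H; split; apply abs_bounds;
  eapply Rle_trans; [apply Rmax_l | exact H | apply Rmax_r | exact H].
Qed.

Lemma dinf_le a b c : -c <= fst a - fst b <= c -> -c <= snd a - snd b <= c ->
  dinf a b <= c.
Proof. intros; unfold dinf, ninf; simpl; apply Rmax_lub; apply Rabs_le; lra. Qed.

Lemma dinf_ge0 a b : 0 <= dinf a b.
Proof. unfold dinf, ninf; eapply Rle_trans; [apply Rabs_pos | apply Rmax_l]. Qed.

Lemma ninf_bounds a M : ninf a <= M -> fst a <= M /\ snd a <= M.
Proof.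
  unfold ninf; intro H; split.
  - eapply Rle_trans; [apply Rle_abs|]; eapply Rle_trans; [apply Rmax_l|exact H].
  - eapply Rle_trans; [apply Rle_abs|]; eapply Rle_trans; [apply Rmax_r|exact H].
Qed.

Lemma A_iff x y : 0 < x -> (y >= 1/x <-> x*y >= 1).
Proof.
  intro hx; split; intro H.
  - apply Rle_ge. replace 1 with (x*(1/x)) by (field; lra).
    apply Rmult_le_compat_l; lra.
  - apply Rle_ge. replace y with ((1/x)*(x*y)) by (field; lra).
    rewrite <- (Rmult_1_r (1/x)) at 1.
    apply Rmult_le_compat_l; [|lra].
    unfold Rdiv; rewrite Rmult_1_l; left; apply Rinv_0_lt_compat; lra.
Qed.

Lemma B_iff u v : -1 < u -> (v <= 1/(u+1) - 1 <-> (u+1)*(v+1) <= 1).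
Proof.
  intro hu; split; intro H.
  - assert (e : (u+1)*(1/(u+1)) = 1) by (field; lra).
    eapply Rle_trans; [|right; exact e]. apply Rmult_le_compat_l; lra.
  - assert (h: v + 1 <= 1/(u+1)); [|lra].
    replace (v+1) with ((1/(u+1))*((u+1)*(v+1))) by (field; lra).
    rewrite <- (Rmult_1_r (1/(u+1))) at 2.
    apply Rmult_le_compat_l; [|lra].
    unfold Rdiv; rewrite Rmult_1_l; left; apply Rinv_0_lt_compat; lra.
Qed.

Lemma core x1 y1 x2 s t M d :
  0 < x1 -> x1 * y1 >= 1 -> x2 <= s + d -> y1 <= t + d -> s * t <= 1 ->
  t <= M + 3 -> x1 <= M -> 1 <= M -> 0 <= d -> 2*M*d <= 1 ->
  x2 - x1 <= 2*M*(2*M+3)*d.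
Proof.
  intros.
  assert (hy0 : y1 > 0) by nra.
  assert (hy : M * y1 >= 1) by nra.
  assert (hMt : M * y1 <= M*t + M*d) by nra.
  assert (ht : 2*M*t >= 1) by nra.
  assert (ht0 : t > 0) by nra.
  assert (h1 : t*(x2 - x1) <= t*d + x1*d) by nra.
  assert (h2 : t*d + x1*d <= (2*M+3)*d) by nra.
  destruct (Rle_dec (x2 - x1) 0); [nra|].
  assert (2*M*t*(x2-x1) >= x2 - x1) by nra.
  nra.
Qed.

Lemma dist1 : is_dist setA setB 1.
Proof.
  split.
  - intros [x y] [u v] [hx hy] [hu hv]; simpl in *.
    apply A_iff in hy; auto. apply B_iff in hv; auto.
    unfold dinf, ninf; simpl.
    destruct (Rle_dec 1 (Rabs (x - u))) as [h|h].
    + eapply Rle_trans; [exact h|apply Rmax_l].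
    + destruct (Rle_dec 1 (Rabs (y - v))) as [h'|h'].
      * eapply Rle_trans; [exact h'|apply Rmax_r].
      * exfalso. apply Rnot_le_lt in h; apply Rnot_le_lt in h'.
        pose proof (Rle_abs (x-u)); pose proof (Rle_abs (y-v)).
        assert (x < u+1) by lra. assert (y < v+1) by lra.
        assert (0 < y) by nra. nra.
  - intros m H. specialize (H (1,1) (0,0)).
    assert (e : dinf (1,1) (0,0) = 1).
    { unfold dinf, ninf; simpl. replace (1-0) with 1 by ring.
      rewrite Rabs_R1; unfold Rmax; destruct Rle_dec; lra. }
    rewrite <- e. apply H; unfold setA, setB; simpl; split; lra.
Qed.

Lemma dist_uniq d : is_dist setA setB d -> d = 1.
Proof.
  intros [h1 h2]. destruct dist1 as [g1 g2].
  apply Rle_antisym; [apply g2; exact h1 | apply h2; exact g1].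
Qed.

Lemma key a1 a2 b M d : setA a1 -> setA a2 -> setB b ->
  ninf a1 <= M -> ninf a2 <= M -> 1 <= M -> 0 <= d -> 2*M*d <= 1 ->
  dinf a1 b <= 1 + d -> dinf a2 b <= 1 + d ->
  dinf a1 a2 <= 2*M*(2*M+3)*d.
Proof.
  destruct a1 as [x1 y1], a2 as [x2 y2], b as [u v].
  intros [hx1 hy1] [hx2 hy2] [hu hv] n1 n2 hM hd hMd d1 d2; simpl in *.
  apply A_iff in hy1; auto. apply A_iff in hy2; auto. apply B_iff in hv; auto.
  apply ninf_bounds in n1; apply ninf_bounds in n2; simpl in *.
  apply dinf_bounds in d1; apply dinf_bounds in d2; simpl in *.
  assert (y1 > 0) by nra. assert (y2 > 0) by nra.
  set (s := u+1) in *. set (t := v+1) in *.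
  assert (hst : s * t <= 1) by (unfold s, t in *; lra).
  apply dinf_le; simpl.
  - assert (x1 - x2 <= 2*M*(2*M+3)*d) by
      (apply (core x2 y2 x1 s t M d); unfold s, t in *; nra).
    assert (x2 - x1 <= 2*M*(2*M+3)*d) by
      (apply (core x1 y1 x2 s t M d); unfold s, t in *; nra).
    split; lra.
  - assert (y1 - y2 <= 2*M*(2*M+3)*d) by
      (apply (core y2 x2 y1 t s M d); unfold s, t in *; nra).
    assert (y2 - y1 <= 2*M*(2*M+3)*d) by
      (apply (core y1 x1 y2 t s M d); unfold s, t in *; nra).
    split; lra.
Qed.

Lemma buc : BUC setA setB.
Proof.
  intros d0 hd0 x z y hx hz hy [M1 hM1] [M2 hM2] cx cz.
  apply dist_uniq in hd0; subst d0.
  set (M := Rmax 1 (Rmax M1 M2)).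
  assert (hM : 1 <= M) by apply Rmax_l.
  assert (hm1 : forall n, ninf (x n) <= M).
  { intro n; eapply Rle_trans; [apply hM1|]; unfold M;
    eapply Rle_trans; [apply Rmax_l|apply Rmax_r]. }
  assert (hm2 : forall n, ninf (z n) <= M).
  { intro n; eapply Rle_trans; [apply hM2|]; unfold M;
    eapply Rle_trans; [apply Rmax_r|apply Rmax_r]. }
  intros eps heps.
  set (K := 2*M*(2*M+3)).
  assert (hK : K > 0) by (unfold K; nra).
  set (d := Rmin (1/(2*M)) (eps/(2*K))).
  assert (hd : 0 < d).
  { unfold d, Rmin; destruct Rle_dec; unfold Rdiv;
    apply Rmult_lt_0_compat; try lra; apply Rinv_0_lt_compat; lra. }
  assert (hdM : 2*M*d <= 1).
  { assert (d <= 1/(2*M)) by apply Rmin_l.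
    replace 1 with (2*M*(1/(2*M))) by (field; lra). nra. }
  assert (hdK : K*d < eps).
  { assert (d <= eps/(2*K)) by apply Rmin_r.
    assert (K * (eps/(2*K)) = eps/2) by (field; lra). nra. }
  destruct (cx d hd) as [N1 h1]. destruct (cz d hd) as [N2 h2].
  exists (max N1 N2). intros n hn.
  assert (g1 := h1 n ltac:(lia)). assert (g2 := h2 n ltac:(lia)).
  unfold R_dist in *. apply Rlt_le, abs_bounds in g1. apply Rlt_le, abs_bounds in g2.
  rewrite Rminus_0_r, Rabs_pos_eq by apply dinf_ge0.
  eapply Rle_lt_trans; [|exact hdK].
  apply (key _ _ (y n) M d); auto; lra.
Qed.

Lemma notuc : ~ UC setA setB.
Proof.
  intro H.
  set (N := fun n => INR n + 1).
  assert (hN : forall n, 1 <= N n) by (intro; unfold N; pose proof (pos_INR n); lra).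
  specialize (H 1 dist1 (fun n => (N n, 1/N n)) (fun n => (N n - 1/2, 2/N n))
                (fun n => (N n - 1, 1/N n - 1))).
  assert (C : Un_cv (fun n => dinf (N n, 1 / N n) (N n - 1/2, 2 / N n)) 0).
  { apply H.
    - intro n; split; simpl; [pose proof (hN n); lra|].
      apply A_iff; [pose proof (hN n); lra|]. right; field; pose proof (hN n); lra.
    - intro n; split; simpl; [pose proof (hN n); lra|].
      apply A_iff; [pose proof (hN n); lra|].
      pose proof (hN n).
      replace ((N n - 1/2) * (2 / N n)) with (2 - 1 / N n) by (field; lra).
      assert (1 / N n <= 1); [|lra].
      unfold Rdiv; rewrite Rmult_1_l; rewrite <- Rinv_1; apply Rinv_le_contravar; lra.
    - intro n; split; simpl; [pose proof (hN n); lra|].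
      replace (N n - 1 + 1) with (N n) by ring; lra.
    - intros eps he; exists 0%nat; intros n _.
      unfold R_dist; simpl.
      replace (dinf (N n, 1 / N n) (N n - 1, 1 / N n - 1)) with 1; [rewrite Rminus_diag, Rabs_R0; lra|].
      unfold dinf, ninf; simpl.
      replace (N n - (N n - 1)) with 1 by ring.
      replace (1 / N n - (1 / N n - 1)) with 1 by ring.
      rewrite Rabs_R1; unfold Rmax; destruct Rle_dec; lra.
    - intros eps he.
      destruct (INR_archimed eps 1 he) as [k hk].
      exists k; intros n hn.
      pose proof (hN n).
      assert (dinf (N n - 1 / 2, 2 / N n) (N n - 1, 1 / N n - 1) = 1 + 1 / N n) as ->.
      { unfold dinf, ninf; simpl.
        replace (N n - 1/2 - (N n - 1)) with (1/2) by field.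
        replace (2 / N n - (1 / N n - 1)) with (1 + 1 / N n) by (field; lra).
        assert (0 < 1 / N n) by (apply Rdiv_lt_0_compat; lra).
        rewrite (Rabs_pos_eq (1/2)) by lra. rewrite (Rabs_pos_eq (1 + 1/N n)) by lra.
        unfold Rmax; destruct Rle_dec; lra. }
      unfold R_dist. replace (1 + 1 / N n - 1) with (1 / N n) by ring.
      assert (0 < 1 / N n) by (apply Rdiv_lt_0_compat; lra).
      rewrite Rabs_pos_eq by lra.
      assert (INR k <= INR n) by (apply le_INR; lia).
      assert (N n * eps > 1) by (unfold N in *; nra).
      assert (N n * (1 / N n) = 1) by (field; lra).
      nra. }
  destruct (C (1/2) ltac:(lra)) as [k hk].
  specialize (hk k (le_n k)). unfold R_dist in hk.
  rewrite Rminus_0_r, Rabs_pos_eq in hk by apply dinf_ge0.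
  unfold dinf, ninf in hk; simpl in hk.
  replace (N k - (N k - 1/2)) with (1/2) in hk by ring.
  rewrite (Rabs_pos_eq (1/2)) in hk by lra.
  pose proof (Rmax_l (1/2) (Rabs (1 / N k - 2 / N k))). lra.
Qed.

Theorem mainTheorem16 :
  is_dist setA setB 1 /\ BUC setA setB /\ ~ UC setA setB.
Proof. split; [exact dist1 | split; [exact buc | exact notuc]]. Qed.
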